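(* Let $P$ be a poset and let $\mathcal{U}_1\subseteq\mathcal{U}_2\subseteq\mathcal{U}_3$ be frame-generating join-specifications for $P$. For $k\in\{1,2,3\}$ let $\eta_k:P\to\mathcal{I}_{\mathcal{U}_k}$ be $p\mapsto p^\downarrow$. Then there are frame morphisms $\phi_1:\mathcal{I}_{\mathcal{U}_1}\to\mathcal{I}_{\mathcal{U}_2}$, $\phi_2:\mathcal{I}_{\mathcal{U}_2}\to\mathcal{I}_{\mathcal{U}_3}$ and $\phi:\mathcal{I}_{\mathcal{U}_1}\to\mathcal{I}_{\mathcal{U}_3}$ with $\phi=\phi_2\circ\phi_1$, $\phi_1\circ\eta_1=\eta_2$, $\phi_2\circ\eta_2=\eta_3$ and $\phi\circ\eta_1=\eta_3$; moreover $\phi_1,\phi_2,\phi$ are the unique frame morphisms satisfying these respective equations with the $\eta$ maps.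
   Context: A join-specification for $P$ is a set $\mathcal{U}\subseteq\wp(P)$ such that $\bigvee S$ exists in $P$ for every $S\in\mathcal{U}$ and $\{p\}\in\mathcal{U}$ for every $p\in P$. A $\mathcal{U}$-ideal is a down-closed $C\subseteq P$ with $\bigvee S\in C$ whenever $S\in\mathcal{U}$, $S\subseteq C$; $\mathcal{I}_{\mathcal{U}}$ is the complete lattice of $\mathcal{U}$-ideals under inclusion; $\mathcal{U}$ is frame-generating if $\mathcal{I}_{\mathcal{U}}$ is a frame. A frame morphism is a lattice homomorphism preserving arbitrary joins. *)

(* Defs.v *)
From Stdlib Require Import Classical.
Set Implicit Arguments.

Record Poset := {
  carrier :> Type;
  le : carrier -> carrier -> Prop;
  le_refl : forall x, le x x;
  le_trans : forall x y z, le x y -> le y z -> le x z;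
  le_anti : forall x y, le x y -> le y x -> x = y
}.

Section Defs.
Variable P : Poset.

Definition subset (A B : P -> Prop) := forall x, A x -> B x.

Definition is_join (S : P -> Prop) (j : P) : Prop :=
  (forall x, S x -> le P x j) /\ (forall u, (forall x, S x -> le P x u) -> le P j u).

Definition join_spec (U : (P -> Prop) -> Prop) : Prop :=
  (forall S, U S -> exists j, is_join S j) /\ (forall p : P, U (fun x => x = p)).

Definition is_U_ideal (U : (P -> Prop) -> Prop) (C : P -> Prop) : Prop :=
  (forall x y, le P x y -> C y -> C x) /\
  (forall S j, U S -> subset S C -> is_join S j -> C j).

(** The lattice I_U of U-ideals (ordered by inclusion). *)
Definition Ideal (U : (P -> Prop) -> Prop) := {C : P -> Prop | is_U_ideal U C}.

Variable U : (P -> Prop) -> Prop.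

Lemma meet_ideal (A B : Ideal U) :
  is_U_ideal U (fun x => proj1_sig A x /\ proj1_sig B x).
Proof.
  destruct A as [A [HA1 HA2]], B as [B [HB1 HB2]]; simpl; split.
  - intros x y Hxy [Ha Hb]; split; eauto.
  - intros S j HS Hsub Hj; split;
      [apply (HA2 S j HS) | apply (HB2 S j HS)]; auto;
      intros x Hx; apply Hsub; auto.
Qed.

Definition imeet (A B : Ideal U) : Ideal U := exist _ _ (meet_ideal A B).

Lemma join_ideal (F : Ideal U -> Prop) :
  is_U_ideal U (fun x => forall C : Ideal U,
       (forall A, F A -> subset (proj1_sig A) (proj1_sig C)) -> proj1_sig C x).
Proof.
  split.
  - intros x y Hxy Hy C HC. destruct C as [C [HC1 HC2]]; simpl in *.
    apply (HC1 x y Hxy). exact (Hy (exist _ C (conj HC1 HC2)) HC).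
  - intros S j HS Hsub Hj C HC. destruct C as [C [HC1 HC2]]; simpl in *.
    apply (HC2 S j HS); auto.
    intros x Hx. exact (Hsub x Hx (exist _ C (conj HC1 HC2)) HC).
Qed.

Definition ijoin (F : Ideal U -> Prop) : Ideal U := exist _ _ (join_ideal F).

Definition ijoin2 (A B : Ideal U) : Ideal U := ijoin (fun C => C = A \/ C = B).

(** U is frame-generating: I_U is a frame (infinite distributive law). *)
Definition frame_generating : Prop :=
  forall (a : Ideal U) (F : Ideal U -> Prop),
    imeet a (ijoin F) = ijoin (fun c => exists b, F b /\ c = imeet a b).

Lemma down_ideal (p : P) : is_U_ideal U (fun x => le P x p).
Proof.
  split.
  - intros x y Hxy Hy; eapply le_trans; eauto.
  - intros S j _ Hsub [_ Hj]. apply Hj. exact Hsub.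
Qed.

Definition eta (p : P) : Ideal U := exist _ _ (down_ideal p).

End Defs.
Arguments Ideal {P} U.
Arguments imeet {P U}.
Arguments ijoin {P U}.
Arguments ijoin2 {P U}.
Arguments eta {P} U p.
Arguments frame_generating {P} U.
Arguments join_spec {P} U.

Definition frame_morphism (P : Poset) (U V : (P -> Prop) -> Prop)
  (f : Ideal U -> Ideal V) : Prop :=
  (forall a b, f (imeet a b) = imeet (f a) (f b)) /\
  (forall a b, f (ijoin2 a b) = ijoin2 (f a) (f b)) /\
  (forall F : Ideal U -> Prop,
      f (ijoin F) = ijoin (fun c => exists a, F a /\ c = f a)).

(* Main.v *)
Require Import Defs.
From Stdlib Require Import FunctionalExtensionality PropExtensionality ProofIrrelevance.

Lemma ideal_ext {P : Poset} (V : (P -> Prop) -> Prop) (A B : Ideal V) :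
  (forall x, proj1_sig A x <-> proj1_sig B x) -> A = B.
Proof.
  destruct A as [A HA], B as [B HB]; simpl; intro H.
  assert (A = B) by (apply functional_extensionality; intro x; apply propositional_extensionality; auto).
  subst. f_equal. apply proof_irrelevance.
Qed.

Definition clset {P : Poset} (V : (P -> Prop) -> Prop) (A : P -> Prop) : P -> Prop :=
  fun x => forall C : Ideal V, subset _ A (proj1_sig C) -> proj1_sig C x.

Lemma cl_ideal {P : Poset} (V : (P -> Prop) -> Prop) (A : P -> Prop) :
  is_U_ideal _ V (clset V A).
Proof.
  split.
  - intros x y Hxy Hy C HC. destruct C as [C [HC1 HC2]]; simpl in *.
    apply (HC1 x y Hxy). exact (Hy (exist _ C (conj HC1 HC2)) HC).
  - intros S j HS Hsub Hj C HC. destruct C as [C [HC1 HC2]]; simpl in *.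
    apply (HC2 S j HS); auto.
    intros x Hx. exact (Hsub x Hx (exist _ C (conj HC1 HC2)) HC).
Qed.

Definition cl {P : Poset} (V : (P -> Prop) -> Prop) (A : P -> Prop) : Ideal V :=
  exist _ _ (cl_ideal V A).

Lemma cl_incl {P : Poset} (V : (P -> Prop) -> Prop) (A : P -> Prop) :
  subset _ A (proj1_sig (cl V A)).
Proof. intros x Hx C HC; apply HC; auto. Qed.

Lemma cl_least {P : Poset} {V : (P -> Prop) -> Prop} {A : P -> Prop} (C : Ideal V) :
  subset _ A (proj1_sig C) -> subset _ (proj1_sig (cl V A)) (proj1_sig C).
Proof. intros H x Hx; apply Hx; auto. Qed.

Lemma ijoin_ub {P : Poset} {V : (P -> Prop) -> Prop} {F : Ideal V -> Prop} a :
  F a -> subset _ (proj1_sig a) (proj1_sig (ijoin F)).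
Proof. intros Fa x Hx C HC. exact (HC a Fa x Hx). Qed.

Lemma ijoin_least {P : Poset} {V : (P -> Prop) -> Prop} {F : Ideal V -> Prop} (C : Ideal V) :
  (forall a, F a -> subset _ (proj1_sig a) (proj1_sig C)) -> subset _ (proj1_sig (ijoin F)) (proj1_sig C).
Proof. intros H x Hx. exact (Hx C H). Qed.

Lemma ideal_weaken {P : Poset} (U V : (P -> Prop) -> Prop) (C : P -> Prop) :
  (forall S, U S -> V S) -> is_U_ideal _ V C -> is_U_ideal _ U C.
Proof. intros H [H1 H2]; split; [exact H1 | intros S j HS; apply H2; auto]. Qed.

Definition wk {P : Poset} (U V : (P -> Prop) -> Prop) (H : forall S, U S -> V S) (C : Ideal V) : Ideal U :=
  exist _ _ (ideal_weaken U V (proj1_sig C) H (proj2_sig C)).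

Definition ext {P : Poset} {U} (V : (P -> Prop) -> Prop) (A : Ideal U) : Ideal V :=
  cl V (proj1_sig A).

Lemma ext_join {P : Poset} (U V : (P -> Prop) -> Prop) (H : forall S, U S -> V S) (F : Ideal U -> Prop) :
  ext V (ijoin F) = ijoin (fun c => exists a, F a /\ c = ext V a).
Proof.
  apply ideal_ext; intro x; split.
  - apply (cl_least (ijoin _)).
    apply (ijoin_least (F:=F) (wk U V H (ijoin _))).
    intros a Fa y Hy. simpl.
    apply (ijoin_ub (ext V a)). exists a; auto. apply cl_incl; auto.
  - apply ijoin_least. intros c [a [Fa ->]].
    apply cl_least. intros y Hy. apply cl_incl. exact (ijoin_ub a Fa y Hy).
Qed.

Lemma ext_eta {P : Poset} (U V : (P -> Prop) -> Prop) p :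
  ext V (eta U p) = eta V p.
Proof.
  apply ideal_ext; intro x; split.
  - apply (cl_least (eta V p)). intros y Hy; exact Hy.
  - intro Hx. destruct (proj2_sig (ext V (eta U p))) as [H1 _].
    apply (H1 x p Hx). apply cl_incl. simpl. apply le_refl.
Qed.

Lemma ext_meet {P : Poset} (U V : (P -> Prop) -> Prop) :
  frame_generating V -> forall a b : Ideal U, ext V (imeet a b) = imeet (ext V a) (ext V b).
Proof.
  intros FG a b. apply ideal_ext; intro x; split.
  - intro Hx. split.
    + apply (cl_least (ext V a)) in Hx; auto. intros y [Hy _]; apply cl_incl; auto.
    + apply (cl_least (ext V b)) in Hx; auto. intros y [_ Hy]; apply cl_incl; auto.
  - intros [Ha Hb].
    set (FA := fun C : Ideal V => exists y, proj1_sig a y /\ C = eta V y).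
    set (FB := fun C : Ideal V => exists y, proj1_sig b y /\ C = eta V y).
    assert (HclA : forall z, proj1_sig (ext V a) z -> proj1_sig (ijoin FA) z).
    { apply cl_least. intros y Hy. apply (ijoin_ub (eta V y)). exists y; auto. simpl; apply le_refl. }
    assert (HclB : forall z, proj1_sig (ext V b) z -> proj1_sig (ijoin FB) z).
    { apply cl_least. intros y Hy. apply (ijoin_ub (eta V y)). exists y; auto. simpl; apply le_refl. }
    assert (E := FG (ext V a) FB).
    assert (Hm : proj1_sig (imeet (ext V a) (ijoin FB)) x) by (split; auto).
    rewrite E in Hm. clear Ha Hb. revert x Hm. apply ijoin_least.
    intros c [d [[yb [Hyb ->]] ->]].
    intros z [Hza Hzb].
    assert (E2 := FG (eta V yb) FA).
    assert (Hm2 : proj1_sig (imeet (eta V yb) (ijoin FA)) z) by (split; auto).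
    rewrite E2 in Hm2. clear Hza Hzb. revert z Hm2. apply ijoin_least.
    intros c [d [[ya [Hya ->]] ->]].
    intros w [Hwb Hwa]. simpl in Hwb, Hwa. apply cl_incl. simpl. split.
    + destruct (proj2_sig a) as [H1 _]; eauto.
    + destruct (proj2_sig b) as [H1 _]; eauto.
Qed.

Lemma ext_morph {P : Poset} (U V : (P -> Prop) -> Prop) (H : forall S, U S -> V S) :
  frame_generating V -> frame_morphism (ext (U := U) V).
Proof.
  intro FG. split; [|split].
  - apply ext_meet; auto.
  - intros a b. unfold ijoin2. rewrite (ext_join U V H). f_equal.
    apply functional_extensionality; intro c; apply propositional_extensionality; split.
    + intros [d [[-> | ->] ->]]; auto.
    + intros [-> | ->]; eauto.
  - apply ext_join; auto.
Qed.

Lemma uniq_morph {P : Poset} (U V : (P -> Prop) -> Prop) (f g : Ideal U -> Ideal V) :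
  frame_morphism f -> frame_morphism g -> (forall p, f (eta U p) = g (eta U p)) ->
  forall A, f A = g A.
Proof.
  intros [_ [_ Hf]] [_ [_ Hg]] He A.
  set (FA := fun C : Ideal U => exists y, proj1_sig A y /\ C = eta U y).
  assert (EA : A = ijoin FA).
  { apply ideal_ext; intro x; split.
    - intro Hx. apply (ijoin_ub (eta U x)). exists x; auto. simpl; apply le_refl.
    - revert x. apply ijoin_least. intros c [y [Hy ->]] z Hz. simpl in Hz.
      destruct (proj2_sig A) as [H1 _]; eauto. }
  rewrite EA, Hf, Hg. f_equal.
  apply functional_extensionality; intro c; apply propositional_extensionality; split.
  - intros [a [[y [Hy ->]] ->]]. exists (eta U y). split; [exists y; auto | auto].
  - intros [a [[y [Hy ->]] ->]]. exists (eta U y). split; [exists y; auto | auto].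
Qed.

Lemma ext_comp {P : Poset} (U1 U2 U3 : (P -> Prop) -> Prop) (H23 : forall S, U2 S -> U3 S) (A : Ideal U1) :
  ext U3 A = ext U3 (ext U2 A).
Proof.
  apply ideal_ext; intro x; split.
  - apply cl_least. intros y Hy. apply cl_incl. apply cl_incl. auto.
  - apply cl_least. apply (cl_least (V:=U2) (wk U2 U3 H23 (ext U3 A))). apply cl_incl.
Qed.

Theorem lemma4p1 (P : Poset) (U1 U2 U3 : (P -> Prop) -> Prop) :
  join_spec U1 -> join_spec U2 -> join_spec U3 ->
  (forall S, U1 S -> U2 S) -> (forall S, U2 S -> U3 S) ->
  frame_generating U1 -> frame_generating U2 -> frame_generating U3 ->
  exists (phi1 : Ideal U1 -> Ideal U2) (phi2 : Ideal U2 -> Ideal U3)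
         (phi : Ideal U1 -> Ideal U3),
    frame_morphism phi1 /\ frame_morphism phi2 /\ frame_morphism phi /\
    (forall A, phi A = phi2 (phi1 A)) /\
    (forall p : P, phi1 (eta U1 p) = eta U2 p) /\
    (forall p : P, phi2 (eta U2 p) = eta U3 p) /\
    (forall p : P, phi (eta U1 p) = eta U3 p) /\
    (forall psi : Ideal U1 -> Ideal U2, frame_morphism psi ->
       (forall p : P, psi (eta U1 p) = eta U2 p) -> forall A, psi A = phi1 A) /\
    (forall psi : Ideal U2 -> Ideal U3, frame_morphism psi ->
       (forall p : P, psi (eta U2 p) = eta U3 p) -> forall A, psi A = phi2 A) /\
    (forall psi : Ideal U1 -> Ideal U3, frame_morphism psi ->
       (forall p : P, psi (eta U1 p) = eta U3 p) -> forall A, psi A = phi A).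
Proof.
  intros _ _ _ H12 H23 _ FG2 FG3.
  assert (H13 : forall S, U1 S -> U3 S) by auto.
  exists (ext U2), (ext U3), (ext U3).
  assert (M1 := ext_morph U1 U2 H12 FG2).
  assert (M2 := ext_morph U2 U3 H23 FG3).
  assert (M3 := ext_morph U1 U3 H13 FG3).
  repeat split; try apply M1; try apply M2; try apply M3.
  - intro A; apply (ext_comp U1 U2 U3 H23).
  - intro p; apply ext_eta.
  - intro p; apply ext_eta.
  - intro p; apply ext_eta.
  - intros psi Hpsi He. apply uniq_morph; auto. intro p; rewrite He, ext_eta; auto.
  - intros psi Hpsi He. apply uniq_morph; auto. intro p; rewrite He, ext_eta; auto.
  - intros psi Hpsi He. apply uniq_morph; auto. intro p; rewrite He, ext_eta; auto.
Qed.
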